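(* Let $G$ be a finite simple graph with an initial configuration $c_0$ and let $u,v\in V(G)$ satisfy $N(u)=N(v)$ or $N[u]=N[v]$. Then for every integer $t\geq0$, $|c_t(u)-c_t(v)|\leq\max\{|c_0(u)-c_0(v)|,\ 2\deg(u)\}$.
   Context: Diffusion process: for a configuration $c_t:V(G)\to\mathbb{Z}$, $c_{t+1}(w)=c_t(w)-|\{x\in N(w): c_t(w)>c_t(x)\}|+|\{x\in N(w): c_t(w)<c_t(x)\}|$ for all $w$ simultaneously. $N(u)$ is the open neighbourhood and $N[u]=N(u)\cup\{u\}$ the closed neighbourhood. *)

(* Defs.v *)
From mathcomp Require Import all_boot all_order all_algebra.
Set Implicit Arguments. Unset Strict Implicit. Unset Printing Implicit Defensive.
Import Order.TTheory GRing.Theory Num.Theory.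
Local Open Scope ring_scope.

Definition simple_graph (T : finType) (e : rel T) : Prop :=
  symmetric e /\ irreflexive e.

Definition nbhd (T : finType) (e : rel T) (u : T) : {set T} := [set x | e u x].
Definition cnbhd (T : finType) (e : rel T) (u : T) : {set T} := u |: nbhd e u.
Definition deg (T : finType) (e : rel T) (u : T) : nat := #|nbhd e u|.

Definition diffuse_step (T : finType) (e : rel T) (c : T -> int) : T -> int :=
  fun w => c w - (#|[set x in nbhd e w | c x < c w]|)%:Z
               + (#|[set x in nbhd e w | c w < c x]|)%:Z.

Definition config (T : finType) (e : rel T) (c0 : T -> int) (t : nat) : T -> int :=
  iter t (diffuse_step e) c0.

(* Main.v *)
Require Import Defs.
Set Implicit Arguments. Unset Strict Implicit.
From mathcomp Require Import all_boot all_order all_algebra zify ring.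
Import Order.TTheory GRing.Theory Num.Theory.
Local Open Scope ring_scope.
Lemma card_sum (T : finType) (A : {set T}) (P : pred T) :
  (#|[set x in A | P x]|)%:Z = \sum_(x in A) ((P x : nat)%:Z).
Proof.
rewrite -sum1_card (eq_bigl (fun x => (x \in A) && P x)); last by move=> x; rewrite !inE.
rewrite big_mkcondr /=.
rewrite (big_morph Posz PoszD (erefl _)).
by apply: eq_bigr => x _; case: (P x).
Qed.
Lemma sg_bound (a b y : int) : b <= a ->
  -2 <= ((nat_of_bool (a < y))%:Z - (nat_of_bool (y < a))%:Z) - ((nat_of_bool (b < y))%:Z - (nat_of_bool (y < b))%:Z) <= 0.
Proof.
move=> ba.
case: (ltrP a y) => h1; case: (ltrP y a) => h2; case: (ltrP b y) => h3; case: (ltrP y b) => h4 /=; lia.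
Qed.

Definition sg (a y : int) : int := (nat_of_bool (a < y))%:Z - (nat_of_bool (y < a))%:Z.
Definition Ssum (T : finType) (e : rel T) (c : T -> int) (w : T) : int :=
  \sum_(x in nbhd e w) sg (c w) (c x).

Lemma step_eq (T : finType) (e : rel T) (c : T -> int) w :
  diffuse_step e c w = c w + Ssum e c w.
Proof.
rewrite /diffuse_step (card_sum _ (fun x => c x < c w)) (card_sum _ (fun x => c w < c x)).
by rewrite /Ssum /sg sumrB addrAC -addrA.
Qed.

Lemma constsum (T : finType) (A : {set T}) :
  \sum_(x in A) (-2 : int) = - (2 * #|A|)%N%:Z.
Proof. by rewrite sumr_const -mulr_natr natz; lia. Qed.

Lemma sgB a b y : b <= a -> -2 <= sg a y - sg b y <= 0.
Proof. exact: sg_bound. Qed.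

Lemma keyL (T : finType) (e : rel T) (c : T -> int) (u v : T) :
  simple_graph e -> u != v ->
  (nbhd e u = nbhd e v \/ cnbhd e u = cnbhd e v) ->
  c v <= c u ->
  c u - c v - (2 * deg e u)%N%:Z <= diffuse_step e c u - diffuse_step e c v <= c u - c v.
Proof.
move=> [esym eirr] neq [HN|HC] ba; rewrite !step_eq /Ssum.
- rewrite -HN.
  have -> : c u + \sum_(x in nbhd e u) sg (c u) (c x) - (c v + \sum_(x in nbhd e u) sg (c v) (c x))
     = c u - c v + \sum_(x in nbhd e u) (sg (c u) (c x) - sg (c v) (c x)).
    by rewrite [in RHS]sumrB; ring.
  have h1 : \sum_(x in nbhd e u) (sg (c u) (c x) - sg (c v) (c x)) <= \sum_(x in nbhd e u) (0:int).
    by apply: ler_sum => x _; case/andP: (sgB (c x) ba).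
  have h2 : \sum_(x in nbhd e u) (-2:int) <= \sum_(x in nbhd e u) (sg (c u) (c x) - sg (c v) (c x)).
    by apply: ler_sum => x _; case/andP: (sgB (c x) ba).
  rewrite big1_eq in h1. rewrite constsum in h2. rewrite /deg. lia.
- have mem x : (x \in cnbhd e u) = (x \in cnbhd e v) by rewrite HC.
  have Hv : v \in nbhd e u.
    by have := mem v; rewrite /cnbhd /nbhd !inE eqxx eq_sym (negbTE neq) /= => ->.
  have Hu : u \in nbhd e v.
    by have := mem u; rewrite /cnbhd /nbhd !inE eqxx (negbTE neq) /= => <-.
  have Hp : (fun x => (x \in nbhd e u) && (x != v)) =1 (fun x => (x \in nbhd e v) && (x != u)).
    move=> x /=; have := mem x; rewrite /cnbhd /nbhd !inE.
    case: (eqVneq x u) => [xu|xu]; case: (eqVneq x v) => [xv|xv] /=; subst;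
      rewrite ?eirr ?andbF ?andbT //=.
  have Hd : \sum_(x in nbhd e u) (-2:int) = -2 + \sum_(x in nbhd e v | x != u) (-2:int).
    by rewrite (bigD1 v Hv) /= (eq_bigl _ _ Hp).
  rewrite constsum in Hd.
  have E1 : \sum_(x in nbhd e u) sg (c u) (c x) = sg (c u) (c v) + \sum_(x in nbhd e v | x != u) sg (c u) (c x).
    by rewrite (bigD1 v Hv) /= (eq_bigl _ _ Hp).
  have E2 : \sum_(x in nbhd e v) sg (c v) (c x) = sg (c v) (c u) + \sum_(x in nbhd e v | x != u) sg (c v) (c x).
    by rewrite (bigD1 u Hu).
  rewrite E1 E2.
  have h1 : \sum_(x in nbhd e v | x != u) (sg (c u) (c x) - sg (c v) (c x)) <= \sum_(x in nbhd e v | x != u) (0:int).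
    by apply: ler_sum => x _; case/andP: (sgB (c x) ba).
  have h2 : \sum_(x in nbhd e v | x != u) (-2:int) <= \sum_(x in nbhd e v | x != u) (sg (c u) (c x) - sg (c v) (c x)).
    by apply: ler_sum => x _; case/andP: (sgB (c x) ba).
  rewrite big1_eq sumrB in h1. rewrite sumrB in h2.
  have h3 : -2 <= sg (c u) (c v) - sg (c v) (c u) <= 0.
    rewrite /sg; move: ba; case: (ltrP (c u) (c v)); case: (ltrP (c v) (c u)) => /=; lia.
  set A := \sum_(x in nbhd e v | x != u) sg (c u) (c x) in h1 h2 *.
  set B := \sum_(x in nbhd e v | x != u) sg (c v) (c x) in h1 h2 *.
  set C := \sum_(x in nbhd e v | x != u) (-2:int) in Hd h2 *.
  move: A B C h1 h2 h3 Hd => A B C h1 h2 h3 Hd.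
  rewrite /deg. lia.
Qed.

Lemma deg_eq (T : finType) (e : rel T) (u v : T) :
  simple_graph e -> u != v ->
  (nbhd e u = nbhd e v \/ cnbhd e u = cnbhd e v) -> deg e v = deg e u.
Proof.
move=> [esym eirr] neq [HN|HC]; first by rewrite /deg HN.
have mem x : (x \in cnbhd e u) = (x \in cnbhd e v) by rewrite HC.
have Hv : v \in nbhd e u.
  by have := mem v; rewrite /cnbhd /nbhd !inE eqxx eq_sym (negbTE neq) /= => ->.
have Hu : u \in nbhd e v.
  by have := mem u; rewrite /cnbhd /nbhd !inE eqxx (negbTE neq) /= => <-.
have Hp : (fun x => (x \in nbhd e u) && (x != v)) =1 (fun x => (x \in nbhd e v) && (x != u)).
  move=> x /=; have := mem x; rewrite /cnbhd /nbhd !inE.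
  case: (eqVneq x u) => [xu|xu]; case: (eqVneq x v) => [xv|xv] /=; subst;
    rewrite ?eirr ?andbF ?andbT //=.
rewrite /deg -!sum1_card (bigD1 v Hv) (bigD1 u Hu) /=.
by rewrite (eq_bigl _ _ Hp).
Qed.

Lemma absL (x y D : int) : 0 <= D -> 0 <= x -> x - D <= y <= x ->
  `|y| <= Num.max `|x| D.
Proof.
move=> D0 x0 /andP[h1 h2]; rewrite (ger0_norm x0) le_max.
have [y0|y0] := lerP 0 y.
  by rewrite (ger0_norm y0) h2.
rewrite (ltr0_norm y0); apply/orP; right; lia.
Qed.

Lemma step_bound (T : finType) (e : rel T) (c : T -> int) (u v : T) :
  simple_graph e ->
  (nbhd e u = nbhd e v \/ cnbhd e u = cnbhd e v) ->
  `|diffuse_step e c u - diffuse_step e c v| <= Num.max `|c u - c v| (2 * deg e u)%N%:Z.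
Proof.
move=> G H.
have [->|neq] := eqVneq u v.
  by rewrite subrr normr0 le_max normr_ge0.
have [ba|ab] := boolP (c v <= c u).
  2: rewrite -ltNge in ab.
  apply: absL; [by [] | by rewrite subr_ge0 | exact: keyL].
have neq' : v != u by rewrite eq_sym.
have H' : nbhd e v = nbhd e u \/ cnbhd e v = cnbhd e u by case: H => ->; auto.
have := keyL G neq' H' (ltW ab); rewrite (deg_eq G neq H) => h.
rewrite distrC [`|c u - c v|]distrC.
apply: absL => //; first by rewrite subr_ge0 ltW.
Qed.

Theorem lemma10 (T : finType) (e : rel T) (c0 : T -> int) (u v : T) :
  simple_graph e ->
  (nbhd e u = nbhd e v \/ cnbhd e u = cnbhd e v) ->
  forall t : nat,
    `|config e c0 t u - config e c0 t v| <=
      Num.max `|c0 u - c0 v| ((2 * deg e u)%N)%:Z.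
Proof.
move=> G H; elim=> [|t IH].
  by rewrite /config /= le_max lexx.
have -> : config e c0 t.+1 = diffuse_step e (config e c0 t) by [].
apply: le_trans (step_bound _ G H) _.
by rewrite ge_max IH le_max lexx orbT.
Qed.
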